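(* Let $D$ be a non-commutative division ring with center $F$. Then either $D$ has a maximal subring or $\dim_F(D)\geq |F|$.
   Context: All rings are associative unital and subrings share the identity. A maximal subring of a ring $T$ is a proper subring maximal under inclusion among proper subrings of $T$. $\dim_F(D)$ is the dimension of $D$ as a vector space over its center $F$. *)

(* Defs.v *)
From mathcomp Require Import all_boot all_order all_algebra.
Set Implicit Arguments. Unset Strict Implicit. Unset Printing Implicit Defensive.
Import GRing.Theory.
Local Open Scope ring_scope.

(* A ring D is a division ring if every nonzero element is a unit
   (unitRingType already guarantees 1 != 0). *)
Definition division_ring (D : unitRingType) : Prop :=
  forall x : D, x != 0 -> x \is a GRing.unit.

Definition central (D : unitRingType) (c : D) : Prop :=
  forall x : D, c * x = x * c.

Definition is_subring (D : unitRingType) (S : D -> Prop) : Prop :=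
  [/\ S 1,
      (forall x y, S x -> S y -> S (x - y)) &
      (forall x y, S x -> S y -> S (x * y))].

Definition maximal_subring (D : unitRingType) (S : D -> Prop) : Prop :=
  [/\ is_subring S,
      (exists x, ~ S x) &
      (forall T : D -> Prop, is_subring T -> (forall x, S x -> T x) ->
         (forall x, T x) \/ (forall x, T x <-> S x))].

Definition center_lin_indep (D : unitRingType) (B : D -> Prop) : Prop :=
  forall (n : nat) (b c : 'I_n -> D),
    injective b -> (forall i, B (b i)) -> (forall i, central (c i)) ->
    \sum_(i < n) c i * b i = 0 -> forall i, c i = 0.

Definition center_spanning (D : unitRingType) (B : D -> Prop) : Prop :=
  forall x : D, exists (n : nat) (b c : 'I_n -> D),
    [/\ (forall i, B (b i)), (forall i, central (c i)) &
        x = \sum_(i < n) c i * b i].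

Definition center_basis (D : unitRingType) (B : D -> Prop) : Prop :=
  center_lin_indep B /\ center_spanning B.

(* dim_F(D) >= |F| : some F-basis B of D admits an injection from F into B. *)
Definition dim_center_ge_card_center (D : unitRingType) : Prop :=
  exists (B : D -> Prop) (f : D -> D),
    [/\ center_basis B,
        (forall c, central c -> B (f c)) &
        (forall c1 c2, central c1 -> central c2 -> f c1 = f c2 -> c1 = c2)].

(* Main.v *)
Require Import Defs.
From mathcomp Require Import all_boot all_order all_algebra.
From mathcomp Require boolp classical_sets.
From Stdlib Require Import Classical.
Import GRing.Theory.
Local Open Scope ring_scope.
Set Implicit Arguments. Unset Strict Implicit. Unset Printing Implicit Defensive.

Definition eop (D : unitRingType) (ops : seq (D * D)) (z : D) :=
  \sum_(p <- ops) p.1 * z * p.2.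
Definition lm (D : unitRingType) (a : D) (ops : seq (D * D)) :=
  map (fun p => (a * p.1, p.2)) ops.
Definition rm (D : unitRingType) (b : D) (ops : seq (D * D)) :=
  map (fun p => (p.1, p.2 * b)) ops.

Lemma eop_cat (D : unitRingType) (o1 o2 : seq (D * D)) z :
  eop (o1 ++ o2) z = eop o1 z + eop o2 z.
Proof. by rewrite /eop big_cat. Qed.

Lemma eop_lm (D : unitRingType) a (o : seq (D * D)) z : eop (lm a o) z = a * eop o z.
Proof. by rewrite /eop /lm big_map mulr_sumr; apply: eq_bigr => p _ /=; rewrite !mulrA. Qed.

Lemma eop_rm (D : unitRingType) b (o : seq (D * D)) z : eop (rm b o) z = eop o z * b.
Proof. by rewrite /eop /rm big_map mulr_suml; apply: eq_bigr => p _ /=; rewrite !mulrA. Qed.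

Lemma eop_cons (D : unitRingType) p (o : seq (D * D)) z : eop (p :: o) z = p.1 * z * p.2 + eop o z.
Proof. by rewrite /eop big_cons. Qed.

Lemma eop_flat (D : unitRingType) (I : Type) (s : seq I) (f : I -> seq (D * D)) z :
  eop (flatten (map f s)) z = \sum_(l <- s) eop (f l) z.
Proof.
elim: s => [|a s IH]; first by rewrite /eop !big_nil.
by rewrite /= eop_cat IH big_cons.
Qed.

Definition indep (D : unitRingType) (n : nat) (v : nat -> D) :=
  forall c : nat -> D, (forall j, central (c j)) ->
    \sum_(j < n) c j * v j = 0 -> forall j, (j < n)%N -> c j = 0.

Lemma natr_comm (D : unitRingType) (b : bool) (d : D) : (b%:R : D) * d = d * b%:R.
Proof. by case: b; rewrite ?mul1r ?mulr1 ?mul0r ?mulr0. Qed.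

Lemma sep_ops (D : unitRingType) (hD : division_ring D) n (v : nat -> D) :
  indep n v -> forall l, (l < n)%N ->
  exists ops, forall j, (j < n)%N -> eop ops (v j) = (j == l)%:R.
Proof.
elim: n => [|n IH] Hind l Hl; first by [].
have Hind' : indep n v.
  move=> c cC Hs j jn.
  pose c' j := if (j < n)%N then c j else 0.
  have := Hind c' _ _ j (ltnW jn); rewrite /c' jn; apply.
    by move=> i; rewrite /c'; case: ifP => _ //; move=> x; rewrite mul0r mulr0.
  rewrite big_ord_recr /= ltnn mul0r addr0; apply: etrans Hs.
  by apply: eq_bigr => i _; rewrite ltn_ord.
have Hex : forall l, exists ops, (l < n)%N -> forall j, (j < n)%N -> eop ops (v j) = (j == l)%:R.
  move=> l'; case: (ltnP l' n) => Hl'.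
    by have [ops Hops] := IH Hind' l' Hl'; exists ops.
  by exists [::].
have [phi Hphi] := boolp.choice Hex.
pose s l := eop (phi l) (v n).
have Hsum : forall j, (j < n)%N -> \sum_(l < n) v l * (j == l)%:R = v j.
  move=> j jn; rewrite (bigD1 (Ordinal jn)) //= eqxx mulr1 big1 ?addr0 // => i.
  by rewrite -(inj_eq val_inj) /= eq_sym => /negbTE ->; rewrite mulr0.
have [ops' [H0 Hn0]] : exists ops', (forall j, (j < n)%N -> eop ops' (v j) = 0) /\ eop ops' (v n) != 0.
  pose U := (1, 1) :: flatten (map (fun l : 'I_n => lm (- v l) (phi l)) (index_enum 'I_n)).
  have EU : forall z, eop U z = z - \sum_(l < n) v l * eop (phi l) z.
    move=> z; rewrite eop_cons eop_flat /= mul1r mulr1.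
    congr (_ + _); rewrite -sumrN; apply: eq_bigr => i _; rewrite eop_lm mulNr //.
  case: (eqVneq (eop U (v n)) 0) => Ha; last first.
    exists U; split => // j jn; rewrite EU.
    rewrite (eq_bigr (fun l : 'I_n => v l * (j == l)%:R)) ?Hsum ?subrr // => i _.
    by rewrite Hphi.
  case: (classic (exists (l : 'I_n) (d : D), s l * d != d * s l)) => [[l' [d Hd]]|Hno].
    exists (rm d (phi l') ++ lm (- d) (phi l')); split.
      move=> j jn; rewrite eop_cat eop_rm eop_lm Hphi // mulNr natr_comm subrr //.
    by rewrite eop_cat eop_rm eop_lm mulNr subr_eq0.
  have sC : forall l, (l < n)%N -> central (s l).
    move=> l' ln d; apply: NNPP => H; apply: Hno; exists (Ordinal ln), d; exact/eqP.
  pose c j := if (j < n)%N then - s j else if j == n then 1 else 0.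
  have cC : forall j, central (c j).
    move=> j d; rewrite /c; case: ifP => jn.
      by rewrite mulNr mulrN sC.
    by case: ifP => _; rewrite ?mul1r ?mulr1 ?mul0r ?mulr0.
  have := Hind c cC _ n (ltnSn n).
  rewrite /c ltnn eqxx => H; exfalso; move: (oner_neq0 D); rewrite H ?eqxx //.
  rewrite big_ord_recr /= /c ltnn eqxx mul1r.
  move: Ha; rewrite EU => /eqP; rewrite subr_eq0 => /eqP ->.
  rewrite -big_split big1 // => i _ /=; rewrite ltn_ord mulNr [s i * _]sC ?addNr //.
have [b0 Hb0] : exists b0, b0 = eop ops' (v n) by exists (eop ops' (v n)).
have bU : b0 \is a GRing.unit by apply: hD; rewrite Hb0.
pose psi := lm b0^-1 ops'.
have Hpsi_j : forall j, (j < n)%N -> eop psi (v j) = 0 by move=> j jn; rewrite eop_lm H0 // mulr0.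
have Hpsi_n : eop psi (v n) = 1 by rewrite eop_lm -Hb0 mulVr.
case: (ltngtP l n) => [ln|nl|ln].
- exists (phi l ++ lm (- s l) psi) => j; rewrite ltnS leq_eqVlt => /orP[/eqP->|jn].
    by rewrite eop_cat eop_lm Hpsi_n mulr1 subrr eq_sym; move: ln; case: eqP => // ->; rewrite ltnn.
  by rewrite eop_cat eop_lm Hpsi_j // mulr0 addr0 Hphi.
- by move: Hl; rewrite ltnS leqNgt nl.
- exists psi => j; rewrite ltnS leq_eqVlt => /orP[/eqP->|jn].
    by rewrite Hpsi_n ln eqxx.
  by rewrite Hpsi_j // ln; move: jn; case: eqP => // -> ; rewrite ltnn.
Qed.

Lemma zorn_above (T : Type) (Q : (T -> Prop) -> Prop) (I : T -> Prop) :
  Q I ->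
  (forall G : (T -> Prop) -> Prop, (exists X, G X) -> (forall X, G X -> Q X) ->
     (forall X Y, G X -> G Y -> (forall t, X t -> Y t) \/ (forall t, Y t -> X t)) ->
     Q (fun t => exists2 X, G X & X t)) ->
  exists M, Q M /\ (forall B, Q B -> (forall t, M t -> B t) -> forall t, B t -> M t).
Proof.
move=> QI Hch.
pose P := fun X : T -> Prop => Q (fun t => X t \/ I t).
have QE : forall X Y : T -> Prop, (forall t, X t <-> Y t) -> Q X -> Q Y.
  move=> X Y XY; suff -> : X = Y by [].
  apply: boolp.funext => t; apply: boolp.propext; exact: XY.
case: (@classical_sets.Zorn_bigcup T P) => [F FP Ftot|A [PA Amax]].

  have [[X FX]|F0] := classic (exists X, F X).
    pose G := fun Y : T -> Prop => exists2 X, F X & Y = (fun t => X t \/ I t).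
    have HQ : Q (fun t => exists2 X, G X & X t).
      apply: Hch.
    - by exists (fun t => X t \/ I t); exists X.
    - by move=> Y [Z FZ ->]; apply: FP.
    - move=> Y1 Y2 [Z1 FZ1 ->] [Z2 FZ2 ->].
      case: (Ftot _ _ FZ1 FZ2) => H; [left|right] => t [/H|]; auto.
    apply: QE HQ => t; split.
      move=> [Y [Z FZ ->]] [Zt|It]; [left; exists Z => // | by right].
    move=> [[Z FZ Zt]|It].
      by exists (fun t => Z t \/ I t); [exists Z| left].
    by exists (fun t => X t \/ I t); [exists X| right].
  apply: QE QI => t; split; first by right.
  by case=> // [[Z FZ _]]; case: F0; exists Z.
exists (fun t => A t \/ I t); split => // B QB MB t Bt.
apply: NNPP => nMt.
apply: (Amax B).
  split; first by move=> s As; apply: MB; left.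
  by move=> BA; apply: nMt; left; apply: BA.
apply: QE QB => s; split; first by left.
by case=> // Is; apply: MB; right.
Qed.

Lemma chain_fin (T : eqType) (G : (T -> Prop) -> Prop) :
  (exists X, G X) ->
  (forall X Y, G X -> G Y -> (forall t, X t -> Y t) \/ (forall t, Y t -> X t)) ->
  forall s : seq T, (forall y, y \in s -> exists2 X, G X & X y) ->
  exists X, G X /\ forall y, y \in s -> X y.
Proof.
move=> [X0 GX0] Gch; elim=> [|a s IH] Hs; first by exists X0.
have [Xa GXa Xaa] := Hs a (mem_head _ _).
have [Xs [GXs HXs]] : exists X, G X /\ forall y, y \in s -> X y.
  by apply: IH => y ys; apply: Hs; rewrite inE ys orbT.
case: (Gch _ _ GXa GXs) => H.
  exists Xs; split => // y; rewrite inE => /orP[/eqP->|]; auto.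
exists Xa; split => // y; rewrite inE => /orP[/eqP->|]; auto.
Qed.

Lemma sub0 (D : unitRingType) (S : D -> Prop) : is_subring S -> S 0.
Proof. by move=> [S1 SB SM]; rewrite -(subrr 1); apply: SB. Qed.

Lemma subD (D : unitRingType) (S : D -> Prop) : is_subring S ->
  forall x y, S x -> S y -> S (x + y).
Proof.
move=> HS x y Sx Sy; have S0 := sub0 HS; case: HS => [S1 SB SM].
by have := SB x (0 - y) Sx (SB _ _ S0 Sy); rewrite sub0r opprK.
Qed.

Lemma sub_sum (D : unitRingType) (S : D -> Prop) (I : Type) (s : seq I) (F : I -> D) :
  is_subring S -> (forall i, S (F i)) -> S (\sum_(i <- s) F i).
Proof.
move=> HS HF; elim: s => [|a s IH]; first by rewrite big_nil; apply: sub0.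
by rewrite big_cons; apply: subD.
Qed.

Lemma maxsub_of_fg (D : unitRingType) (C : D -> Prop) (gs : seq D) :
  is_subring C -> (exists z, ~ C z) ->
  (forall T, is_subring T -> (forall c, C c -> T c) ->
     (forall g, g \in gs -> T g) -> forall d, T d) ->
  exists S : D -> Prop, maximal_subring S.
Proof.
move=> SC [z nCz] Hgen.
pose Q := fun T : D -> Prop => [/\ is_subring T, (forall c, C c -> T c) & exists z, ~ T z].
have [M [[SM CM [w nMw]] Mmax]] : exists M, Q M /\
   (forall B, Q B -> (forall t, M t -> B t) -> forall t, B t -> M t).
  apply: (zorn_above (I := C)); first by split => //; exists z.
  move=> G [X0 GX0] GQ Gch; split.
  - split.
    + by exists X0 => //; case: (GQ _ GX0) => [[]].
    + move=> x y [X GX Xx] [Y GY Yy].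
      case: (Gch _ _ GX GY) => H.
        by exists Y => //; case: (GQ _ GY) => [[_ HB _]] _ _; apply: HB => //; apply: H.
      by exists X => //; case: (GQ _ GX) => [[_ HB _]] _ _; apply: HB => //; apply: H.
    + move=> x y [X GX Xx] [Y GY Yy].
      case: (Gch _ _ GX GY) => H.
        by exists Y => //; case: (GQ _ GY) => [[_ _ HM]] _ _; apply: HM => //; apply: H.
      by exists X => //; case: (GQ _ GX) => [[_ _ HM]] _ _; apply: HM => //; apply: H.
  - by move=> c Cc; exists X0 => //; case: (GQ _ GX0) => _ H _; apply: H.
  - apply: NNPP => Hall.
    have Hu : forall t, exists2 X, G X & X t.
      by move=> t; apply: NNPP => nt; apply: Hall; exists t.
    have [X [GX HX]] := @chain_fin D G (ex_intro _ X0 GX0) Gch gs (fun y _ => Hu y).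
    case: (GQ _ GX) => SX CX [t nXt]; apply: nXt.
    by apply: Hgen.
exists M; split => //; first by exists w.
move=> T ST MT.
case: (classic (forall x, T x)) => [|nT]; first by left.
right => x; split; last by apply: MT.
apply: Mmax => //; split => //; first by move=> c Cc; apply: MT; apply: CM.
by apply: NNPP => H; apply: nT => y; apply: NNPP => nTy; apply: H; exists y.
Qed.


Definition crel (D : unitRingType) (x : D) (k : nat) := exists c : nat -> D,
  [/\ forall j, central (c j), c k = 1 & \sum_(j < k.+1) c j * x ^+ j = 0].

Lemma centralM (D : unitRingType) (a b : D) : central a -> central b -> central (a * b).
Proof. by move=> Ha Hb z; rewrite -mulrA Hb mulrA Ha mulrA. Qed.

Lemma centralV (D : unitRingType) (a : D) : central a -> central a^-1.
Proof.
move=> Ha z; case: (boolP (a \is a GRing.unit)) => aU; last by rewrite invr_out // Ha.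
apply: (mulrI aU); rewrite mulrA divrr // mul1r mulrA Ha -mulrA divrr // mulr1 //.
Qed.

Fixpoint Tq (D : unitRingType) (x d : D) (s : nat) : D :=
  match s with 0 => 0 | s'.+1 => d * x ^+ s' + x * Tq x d s' end.

Lemma Tq_comm (D : unitRingType) (x d : D) s :
  x * Tq x d s = Tq x d s * x + (x ^+ s * d - d * x ^+ s).
Proof.
elim: s => [|s IH] /=; first by rewrite mulr0 mul0r expr0 mul1r mulr1 subrr addr0.
rewrite mulrDr {1}IH mulrDr mulrBr !mulrA -exprS.
rewrite mulrDl -!mulrA -exprSr !mulrA.
rewrite addrCA [x * d * _ + _]addrC subrK.
by rewrite -addrA addrCA [d * _ + _]addrC subrK.
Qed.

Lemma centralN1 (D : unitRingType) (b : bool) : central (b%:R : D).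
Proof. by move=> z; case: b; rewrite ?mul1r ?mulr1 ?mul0r ?mulr0. Qed.

Lemma rel_min (D : unitRingType) (x : D) k : crel x k ->
  exists n, crel x n /\ forall k', crel x k' -> (n <= k')%N.
Proof.
move=> Hk.
have exP : exists k, boolp.asbool (crel x k) by exists k; apply/boolp.asboolP.
case: (ex_minnP exP) => n /boolp.asboolP Hn Hmin.
by exists n; split => // k' Hk'; apply: Hmin; apply/boolp.asboolP.
Qed.

Lemma indep_pow (D : unitRingType) (hD : division_ring D) (x : D) n :
  (forall k', crel x k' -> (n <= k')%N) -> indep n (fun j => x ^+ j).
Proof.
move=> Hmin c cC Hs j jn; apply: NNPP => cj.
have exP : exists i, (i < n)%N && (c i != 0) by exists j; rewrite jn; apply/eqP.
have ubP : forall i, (i < n)%N && (c i != 0) -> (i <= n)%N by move=> i /andP[/ltnW].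
case: (ex_maxnP exP ubP) => k /andP[kn ck] Hk.
have cU : c k \is a GRing.unit by apply: hD.
have : (n <= k)%N; last by rewrite leqNgt kn.
apply: Hmin; exists (fun i => (c k)^-1 * c i); split.
- by move=> i; apply: centralM => //; apply: centralV.
- by rewrite mulVr.
rewrite (eq_bigr (fun i : 'I_k.+1 => (c k)^-1 * (c i * x ^+ i))); last by move=> i _; rewrite mulrA.
rewrite -mulr_sumr (big_ord_widen n (fun i => c i * x ^+ i) kn) big_mkcond /=.
rewrite (_ : \sum_(i < n) (if (i < k.+1)%N then c i * x ^+ i else 0) = \sum_(i < n) c i * x ^+ i); first by rewrite Hs mulr0.
apply: eq_bigr => i _; case: ifP => // /negbT; rewrite -leqNgt => ki.
case: (eqVneq (c i) 0) => [->|ci]; first by rewrite mul0r.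
have := Hk i; rewrite ltn_ord ci => /(_ isT) ik.
by move: (leq_trans ki ik); rewrite ltnn.
Qed.

Lemma sub_sum_in (D : unitRingType) (S : D -> Prop) (I : eqType) (s : seq I) (F : I -> D) :
  is_subring S -> (forall i, i \in s -> S (F i)) -> S (\sum_(i <- s) F i).
Proof.
move=> HS; elim: s => [|a s IH] HF; first by rewrite big_nil; apply: sub0.
rewrite big_cons; apply: subD => //; first by apply: HF; rewrite mem_head.
by apply: IH => i iS; apply: HF; rewrite inE iS orbT.
Qed.

Lemma alg_fg (D : unitRingType) (hD : division_ring D) (x : D) k : crel x k ->
  exists gs : seq D, forall T : D -> Prop, is_subring T ->
    (forall c, c * x = x * c -> T c) ->
    (forall g, g \in gs -> T g) -> forall d, T d.
Proof.
move=> Hk; have [n [[m [mC mn msum]] Hmin]] := rel_min Hk.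
have Hind := indep_pow hD Hmin.
case: n Hind Hmin mn msum => [|n'] Hind Hmin mn msum.
  by move: msum; rewrite big_ord1 expr0 mulr1 mn => /eqP; rewrite oner_eq0.
have [ops Hops] := sep_ops hD Hind (ltnSn n').
pose Q d := \sum_(s < n'.+2) m s * Tq x d s.
have QC : forall d, Q d * x = x * Q d.
  move=> d; apply/eqP; rewrite eq_sym -subr_eq0; apply/eqP.
  rewrite /Q mulr_sumr mulr_suml -sumrB.
  rewrite (eq_bigr (fun s : 'I_n'.+2 => (m s * x ^+ s) * d - d * (m s * x ^+ s))).
    by rewrite sumrB -mulr_suml -mulr_sumr msum mul0r mulr0 subrr.
  move=> s _.
  rewrite mulrA -mC -mulrA -mulrA -mulrBr Tq_comm [Tq _ _ _ * x + _]addrC addrK.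
  by rewrite mulrBr !mulrA (mC s d).
have Hdec : forall d, d = \sum_(p <- ops) Q (d * p.1) * p.2.
  move=> d.
  pose U s := \sum_(p <- ops) Tq x (d * p.1) s * p.2.
  have US : forall s, U s.+1 = d * eop ops (x ^+ s) + x * U s.
    move=> s; rewrite /U /eop !mulr_sumr -big_split /=; apply: eq_bigr => p _.
    by rewrite mulrDl !mulrA.
  have U0 : forall s, (s <= n')%N -> U s = 0.
    elim=> [|s IH] sn; first by rewrite /U big1 // => p _; rewrite mul0r.
    rewrite US Hops ?(ltn_trans sn) // ltn_eqF // IH ?(ltnW sn) //.
    by rewrite mulr0 mulr0 addr0.
  have Un : U n'.+1 = d by rewrite US Hops // eqxx mulr1 U0 // mulr0 addr0.
  have E : forall s, \sum_(p <- ops) m s * Tq x (d * p.1) s * p.2 = m s * U s.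
    by move=> s; rewrite /U mulr_sumr; apply: eq_bigr => p _; rewrite mulrA.
  rewrite /Q (eq_bigr (fun p => \sum_(s < n'.+2) m s * Tq x (d * p.1) s * p.2)); last first.
    by move=> p _; rewrite mulr_suml.
  rewrite exchange_big /= (eq_bigr (fun s : 'I_n'.+2 => m s * U s)); last by move=> s _; apply: E.
  rewrite big_ord_recr /= Un mn mul1r big1 ?add0r // => s _.
  by rewrite U0 ?mulr0 // -ltnS.
exists (map snd ops) => T ST CT GT d.
rewrite (Hdec d); apply: sub_sum_in => // p pin.
case: ST => [_ _ SM]; apply: SM; first by apply: CT; apply: QC.
by apply: GT; apply: map_f.
Qed.


Definition cpoly (D : unitRingType) (p : {poly D}) := forall i, central p`_i.

Lemma central0 (D : unitRingType) : central (0 : D).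
Proof. by move=> z; rewrite mul0r mulr0. Qed.
Lemma central1 (D : unitRingType) : central (1 : D).
Proof. by move=> z; rewrite mul1r mulr1. Qed.
Lemma centralD (D : unitRingType) (a b : D) : central a -> central b -> central (a + b).
Proof. by move=> Ha Hb z; rewrite mulrDl mulrDr Ha Hb. Qed.
Lemma centralN (D : unitRingType) (a : D) : central a -> central (- a).
Proof. by move=> Ha z; rewrite mulNr mulrN Ha. Qed.
Lemma centralB (D : unitRingType) (a b : D) : central a -> central b -> central (a - b).
Proof. by move=> Ha Hb; apply: centralD => //; apply: centralN. Qed.
Lemma central_sum (D : unitRingType) (I : Type) (s : seq I) (F : I -> D) :
  (forall i, central (F i)) -> central (\sum_(i <- s) F i).
Proof.
move=> HF; elim: s => [|a s IH]; first by rewrite big_nil; apply: central0.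
by rewrite big_cons; apply: centralD.
Qed.

Lemma no_rel_poly (D : unitRingType) (hD : division_ring D) (x : D) :
  (forall k, ~ crel x k) -> forall r : {poly D}, cpoly r -> r.[x] = 0 -> r = 0.
Proof.
move=> Hno r rC rx; apply/eqP; apply: NNPP => /negP rn0.
have lU : lead_coef r \is a GRing.unit by apply: hD; rewrite lead_coef_eq0.
have sz : size r = (size r).-1.+1 by rewrite prednK // size_poly_gt0.
apply: (Hno (size r).-1); exists (fun j => (lead_coef r)^-1 * r`_j); split.
- by move=> j; apply: centralM; [apply: centralV; apply: rC | apply: rC].
- exact: mulVr lU.
rewrite (eq_bigr (fun i : 'I_(size r).-1.+1 => (lead_coef r)^-1 * (r`_i * x ^+ i))); last first.
  by move=> i _; rewrite mulrA.
by rewrite -mulr_sumr -sz -horner_coef rx mulr0.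
Qed.

Lemma pf (D : unitRingType) (hD : division_ring D) (x : D)
  (nx : forall a, central a -> x - a != 0)
  (Ht : forall r : {poly D}, cpoly r -> r.[x] = 0 -> r = 0) n :
  forall (a c : nat -> D) (r : {poly D}), (forall i, central (a i)) -> (forall i, central (c i)) ->
  (forall i j, (i < n)%N -> (j < n)%N -> a i = a j -> i = j) -> cpoly r ->
  r.[x] + \sum_(i < n) c i * (x - a i)^-1 = 0 -> r = 0 /\ forall i, (i < n)%N -> c i = 0.
Proof.
elim: n => [|n IH] a c r aC cC ainj rC H.
  by move: H; rewrite big_ord0 addr0 => /Ht -> //.
set a0 := a n.
have uU : forall i, x - a i \is a GRing.unit by move=> i; apply: hD; apply: nx.
have key : forall i, (x - a i)^-1 * (x - a0) = 1 + (a i - a0) * (x - a i)^-1.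
  move=> i; have -> : x - a0 = (x - a i) + (a i - a0) by rewrite addrA subrK.
  by rewrite mulrDr mulVr // (centralB (aC i) (aC n)).
pose r' := r * ('X - a0%:P) + (\sum_(i < n) c i + c n)%:P.
pose c' i := c i * (a i - a0).
have rC' : cpoly r'.
  move=> i; rewrite /r' coefD coefC mulrBr coefB coefMX coefMC.
  apply: centralD; last by case: (i == 0)%N; [apply: centralD; [apply: central_sum|] | apply: central0].
  apply: centralB; last by apply: centralM; [apply: rC | apply: aC].
  by case: (i == 0)%N; [apply: central0 | apply: rC].
have cC' : forall i, central (c' i) by move=> i; apply: centralM; [apply: cC | apply: centralB; apply: aC].
have H' : r'.[x] + \sum_(i < n) c' i * (x - a i)^-1 = 0.
  have comm : comm_poly ('X - a0%:P) x.
    by rewrite /comm_poly hornerXsubC mulrBr mulrBl (aC n).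
  rewrite /r' hornerD hornerM_comm // hornerXsubC hornerC.
  move: H; rewrite big_ord_recr /= => /(congr1 (fun z => z * (x - a0))).
  rewrite mul0r !mulrDl -mulrA mulVr // mulr1 mulr_suml => H1.
  apply: etrans H1.
  have -> : \sum_(i < n) c i / (x - a i) * (x - a0) = \sum_(i < n) c i + \sum_(i < n) c' i / (x - a i).
    rewrite -big_split /=; apply: eq_bigr => i _.
    by rewrite -mulrA key mulrDr mulr1 /c' mulrA.
  rewrite -!addrA; congr (_ + _); congr (_ + _); by rewrite addrC.
have [r'0 c'0] := IH a c' r' aC cC' (fun i j ir jr => ainj i j (ltnW ir) (ltnW jr)) rC' H'.
have c0 : forall i, (i < n)%N -> c i = 0.
  move=> i ir; have := c'0 i ir; rewrite /c'.
  have : a i - a0 \is a GRing.unit.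
    apply: hD; rewrite subr_eq0; apply/eqP => E.
    by have := ainj i n (ltnW ir) (ltnSn n) E => iE; move: ir; rewrite iE ltnn.
  by move=> U E; apply: (mulIr U); rewrite E mul0r.
have sum0 : \sum_(i < n) c i = 0 by rewrite big1 // => i _; apply: c0.
move: r'0; rewrite /r' sum0 add0r => /eqP; rewrite addr_eq0 => /eqP E.
have r0 : r = 0.
  apply/eqP; apply: NNPP => /negP rn0.
  have := size_Mmonic rn0 (monicXsubC a0); rewrite E size_polyN size_XsubC addn2 /=.
  by move=> S; have := size_polyC_leq1 (c n); rewrite S ltnS leqn0 size_poly_eq0 (negbTE rn0).
split => // i; rewrite ltnS leq_eqVlt => /orP[/eqP->|ir]; last by apply: c0.
by move: E; rewrite r0 mul0r => /eqP; rewrite eq_sym oppr_eq0 polyC_eq0 => /eqP.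
Qed.


Definition indS (D : unitRingType) (B : D -> Prop) := forall s : seq D, uniq s ->
  (forall y, y \in s -> B y) -> forall c : D -> D, (forall y, central (c y)) ->
  \sum_(y <- s) c y * y = 0 -> forall y, y \in s -> c y = 0.

Lemma indS_I (D : unitRingType) (hD : division_ring D) (x : D)
  (nx : forall a, central a -> x - a != 0)
  (Ht : forall r : {poly D}, cpoly r -> r.[x] = 0 -> r = 0) :
  indS (fun z => exists a, central a /\ z = (x - a)^-1).
Proof.
move=> s us sI c cC Hs y ys.
pose b i := nth 0 s i.
pose a i := if (i < size s)%N then x - (b i)^-1 else 0.
have Hb : forall i, (i < size s)%N -> exists a', [/\ central a', b i = (x - a')^-1 & a i = a'].
  move=> i iS; have [a' [a'C E]] := sI _ (mem_nth 0 iS).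
  exists a'; split => //; rewrite /a iS /b E invrK opprB addrC subrK //.
have aC : forall i, central (a i).
  move=> i; case: (ltnP i (size s)) => iS; first by have [a' [? _ ->]] := Hb i iS.
  by rewrite /a ltnNge iS /=; apply: central0.
have key : forall i, (i < size s)%N -> (x - a i)^-1 = b i.
  by move=> i iS; have [a' [_ -> ->]] := Hb i iS.
have ainj : forall i j, (i < size s)%N -> (j < size s)%N -> a i = a j -> i = j.
  move=> i j iS jS E; apply/eqP; rewrite -(nth_uniq 0 iS jS us).
  by rewrite -/(b i) -/(b j) -(key i iS) -(key j jS) E.
have cpoly0 : cpoly (0 : {poly D}) by move=> i; rewrite coef0; apply: central0.
have Hrel : (0 : {poly D}).[x] + \sum_(i < size s) c (b i) * (x - a i)^-1 = 0.
  rewrite horner0 add0r; apply: etrans Hs; rewrite [RHS](big_nth 0) big_mkord; apply: eq_bigr => i _.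
  by rewrite key.
have [_ H] := @pf D hD x nx Ht (size s) a (fun i => c (b i)) 0 aC (fun i => cC _) ainj cpoly0 Hrel.
have := H (index y s); rewrite index_mem ys /b nth_index //; apply; by [].
Qed.

Lemma indS_lin (D : unitRingType) (B : D -> Prop) : indS B -> center_lin_indep B.
Proof.
move=> HB n b c binj Bb cC Hs i.
pose s := [seq b j | j <- index_enum 'I_n].
pose c' y := \sum_(j < n | b j == y) c j.
have c'b : forall j, c' (b j) = c j.
  by move=> j; rewrite /c' (big_pred1 j) // => k /=; rewrite (inj_eq binj).
have := HB s _ _ c' _ _ (b i) _; rewrite c'b; apply.
- by rewrite map_inj_uniq // index_enum_uniq.
- by move=> z /mapP [j _ ->].
- move=> z; apply: (big_ind (fun w => central w)); first exact: central0.
    by move=> u v; apply: centralD.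
  by move=> j _; apply: cC.
- by rewrite big_map; apply: etrans Hs; apply: eq_bigr => j _; rewrite c'b.
- by apply: map_f; rewrite mem_index_enum.
Qed.

Lemma basis_ext (D : unitRingType) (hD : division_ring D) (I : D -> Prop) : indS I ->
  exists B, center_basis B /\ forall t, I t -> B t.
Proof.
move=> HI.
have [M [[HM IM] Mmax]] : exists M, (indS M /\ forall t, I t -> M t) /\
   (forall B', (indS B' /\ forall t, I t -> B' t) -> (forall t, M t -> B' t) -> forall t, B' t -> M t).
  apply: (zorn_above (I := I)); first by split.
  move=> G G0 GQ Gch; split; last first.
    by case: G0 => X GX t It; exists X => //; case: (GQ X GX) => _; apply.
  move=> s us sU c cC Hs y ys.
  have [X [GX HX]] := chain_fin G0 Gch sU.
  by case: (GQ X GX) => HX' _; apply: (HX' s).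
exists M; split => //; split; first exact: indS_lin.
move=> d; apply: NNPP => nd.
have Md : M d.
  pose M' t := M t \/ t = d.
  have : indS M'.
    move=> s us sM c cC Hs y ys.
    case: (boolP (d \in s)) => ds; last first.
      apply: (HM s us _ c cC Hs y ys) => z zs; case: (sM z zs) => // E.
      by move: ds; rewrite -E zs.
    have remM : forall z, z \in rem d s -> M z.
      move=> z; rewrite (mem_rem_uniq _ us) inE => /andP[zd zs].
      by case: (sM z zs) => // E; move: zd; rewrite E eqxx.
    have Hs' : c d * d + \sum_(z <- rem d s) c z * z = 0.
      by move: Hs; rewrite (perm_big _ (perm_to_rem ds)) big_cons.
    case: (eqVneq (c d) 0) => cd.
      move: Hs'; rewrite cd mul0r add0r => Hs'.
      case: (eqVneq y d) => [->//|yd]; apply: (HM _ (rem_uniq d us) remM c cC Hs' y).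
      by rewrite (mem_rem_uniq _ us) inE yd ys.
    exfalso; apply: nd.
    set s' := rem d s.
    exists (size s'), (fun i : 'I_(size s') => nth 0 s' i),
      (fun i : 'I_(size s') => - (c d)^-1 * c (nth 0 s' i)); split.
    - by move=> i; apply: remM; apply: mem_nth.
    - by move=> i; apply: centralM; [apply: centralN; apply: centralV | ]; apply: cC.
    - have cU : c d \is a GRing.unit by apply: hD.
      rewrite (eq_bigr (fun i : 'I_(size s') => - (c d)^-1 * (c (nth 0 s' i) * nth 0 s' i))); last first.
        by move=> i _; rewrite mulrA.
      have -> : \sum_(i < size s') - (c d)^-1 * (c (nth 0 s' i) * nth 0 s' i) =
                - (c d)^-1 * \sum_(z <- s') c z * z.
        by rewrite mulr_sumr (big_nth 0) big_mkord.
      move/eqP: Hs'; rewrite addr_eq0 => /eqP E.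
      by rewrite -{1}(mulKr cU d) E mulrN mulNr.
  move=> HM'.
  apply: (Mmax M'); [split => // t It; left; exact: IM | by move=> t Mt; left | by right].
apply: nd; exists 1%N, (fun _ => d), (fun _ => 1); split => //; first by move=> _; apply: central1.
by rewrite big_ord1 mul1r.
Qed.

Unset Implicit Arguments.

Theorem corollary2p12 (D : unitRingType) :
  division_ring D ->
  (exists x y : D, x * y != y * x) ->
  (exists S : D -> Prop, maximal_subring S) \/ dim_center_ge_card_center D.
Proof.
move=> hD [x [y nxy]].
have nx : forall a, central a -> x - a != 0.
  by move=> a aC; rewrite subr_eq0; apply/eqP => E; move: nxy; rewrite E aC eqxx.
case: (classic (exists k, crel x k)) => [[k Hk]|Hno].
  left; have [gs Hgs] := alg_fg hD Hk.
  apply: (@maxsub_of_fg D (fun c => c * x = x * c) gs) => //.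
  - split; first by rewrite mul1r mulr1.
    + by move=> a b Ha Hb; rewrite mulrBl mulrBr Ha Hb.
    + by move=> a b Ha Hb; rewrite -mulrA Hb mulrA Ha mulrA.
  - by exists y => E; move: nxy; rewrite E eqxx.
right.
have Hno' : forall k, ~ crel x k by move=> k Hk; apply: Hno; exists k.
have Ht := no_rel_poly hD Hno'.
have [B [HB IB]] := basis_ext hD (indS_I hD nx Ht).
exists B, (fun c => (x - c)^-1); split => //.
- by move=> c cC; apply: IB; exists c.
- by move=> c1 c2 _ _ /invr_inj /addrI /oppr_inj.
Qed.
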